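(* Let $U=\begin{pmatrix} a & b\\ c & d\end{pmatrix}$ be a $2\times 2$ unitary matrix with $abcd\neq 0$. Let $\Phi=\{{}^t[\alpha,\beta]\in\mathbf{C}^2:|\alpha|^2+|\beta|^2=1\}$ and define $$\Phi_s=\{\varphi\in\Phi: P(X_n^{\varphi}=k)=P(X_n^{\varphi}=-k)\text{ for all } n\in\mathbf{Z}_+,\ k\in\mathbf{Z}\},$$ $$\Phi_0=\{\varphi\in\Phi: E(X_n^{\varphi})=0\text{ for all } n\in\mathbf{Z}_+\},$$ $$\Phi_{\perp}=\{\varphi={}^t[\alpha,\beta]\in\Phi: |\alpha|=|\beta|,\ a\alpha\overline{b\beta}+\overline{a\alpha}b\beta=0\}.$$ Then $\Phi_s=\Phi_0=\Phi_{\perp}$.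
   Context: $\mathbf{Z}_+$ denotes the non-negative integers. Quantum random walk on $\mathbf{Z}$ determined by $U$: set $P=\begin{pmatrix} a & b\\ 0&0\end{pmatrix}$, $Q=\begin{pmatrix} 0&0\\ c & d\end{pmatrix}$. For $\varphi\in\Phi$, define amplitudes $\Psi_k(n)\in\mathbf{C}^2$ by $\Psi_0(0)=\varphi$, $\Psi_k(0)=0$ for $k\neq0$, and $\Psi_k(n+1)=P\Psi_{k+1}(n)+Q\Psi_{k-1}(n)$; $X_n^{\varphi}$ takes value $k$ with probability $P(X_n^{\varphi}=k)=\|\Psi_k(n)\|^2$. $\overline{z}$ denotes complex conjugate. *)

(* Defs.v *)
(* complex numbers R[i] over an arbitrary real closed field R
   (mathcomp-real-closed `complex`); R = reals gives the usual C. *)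
From HB Require Import structures.
From mathcomp Require Import all_boot all_order all_algebra.
From mathcomp Require Import complex.
Set Implicit Arguments. Unset Strict Implicit. Unset Printing Implicit Defensive.
Import Order.TTheory GRing.Theory Num.Theory.
Local Open Scope ring_scope.

Section QW.
Variable R : rcfType.
Local Notation C := R[i].

Definition mx2 (a b c d : C) : 'M[C]_2 :=
  \matrix_(i < 2, j < 2)
    if i == 0 then (if j == 0 then a else b) else (if j == 0 then c else d).

Definition col2 (x y : C) : 'cV[C]_2 :=
  \col_(i < 2) if i == 0 then x else y.

Definition unitary_mx (U : 'M[C]_2) : Prop :=
  U *m (map_mx Num.conj U)^T = 1%:M.

Definition sqnorm (v : 'cV[C]_2) : C :=
  `|v 0 0| ^+ 2 + `|v 1 0| ^+ 2.

Definition inPhi (phi : 'cV[C]_2) : Prop := sqnorm phi = 1.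

(* amplitudes Psi_k(n) of the walk determined by U = mx2 a b c d *)
Fixpoint Psi (a b c d : C) (phi : 'cV[C]_2) (n : nat) (k : int) : 'cV[C]_2 :=
  match n with
  | 0 => if k == 0 then phi else 0
  | n'.+1 => mx2 a b 0 0 *m Psi a b c d phi n' (k + 1)
             + mx2 0 0 c d *m Psi a b c d phi n' (k - 1)
  end.

Definition prob (a b c d : C) (phi : 'cV[C]_2) (n : nat) (k : int) : C :=
  sqnorm (Psi a b c d phi n k).

(* E(X_n^phi) = sum_k k P(X_n = k); X_n is supported on [-n, n]
   (sum taken over k = -n, ..., n) *)
Definition expect (a b c d : C) (phi : 'cV[C]_2) (n : nat) : C :=
  \sum_(0 <= i < (2 * n).+1)
     ((i%:Z - n%:Z)%:~R * prob a b c d phi n (i%:Z - n%:Z)).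

Definition inPhi_s (a b c d : C) (phi : 'cV[C]_2) : Prop :=
  inPhi phi /\
  forall (n : nat) (k : int), prob a b c d phi n k = prob a b c d phi n (- k).

Definition inPhi_0 (a b c d : C) (phi : 'cV[C]_2) : Prop :=
  inPhi phi /\ forall n : nat, expect a b c d phi n = 0.

Definition inPhi_perp (a b c d : C) (phi : 'cV[C]_2) : Prop :=
  inPhi phi /\
  let al := phi 0 0 in let be := phi 1 0 in
  `|al| = `|be| /\
  a * al * (b * be)^* + (a * al)^* * (b * be) = 0.

End QW.

(* Main.v *)
Require Import Defs.
From HB Require Import structures.
From mathcomp Require Import all_boot all_order all_algebra.
From mathcomp Require Import complex ring lra zify.
Import Order.TTheory GRing.Theory Num.Theory.
Local Open Scope ring_scope.

Lemma ord2E : (widen_ord (leqnSn 1) ord_max = 0 :> 'I_2) /\ (ord_max = 1 :> 'I_2).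
Proof. by split; apply/val_inj. Qed.

Lemma PsiS0 (R : rcfType) (a b c d : R[i]) phi n k :
  Psi a b c d phi n.+1 k 0 0 =
  a * Psi a b c d phi n (k+1) 0 0 + b * Psi a b c d phi n (k+1) 1 0.
Proof.
case: ord2E => e0 e1.
rewrite /= !mxE !big_ord_recr !big_ord0 /= !mxE /= e0 e1; ring.
Qed.

Lemma PsiS1 (R : rcfType) (a b c d : R[i]) phi n k :
  Psi a b c d phi n.+1 k 1 0 =
  c * Psi a b c d phi n (k-1) 0 0 + d * Psi a b c d phi n (k-1) 1 0.
Proof.
case: ord2E => e0 e1.
rewrite /= !mxE !big_ord_recr !big_ord0 /= !mxE /= e0 e1; ring.
Qed.

Lemma Psi00 (R : rcfType) (a b c d : R[i]) phi k i :
  Psi a b c d phi 0 k i 0 = if k == 0 then phi i 0 else 0.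
Proof. by rewrite /=; case: (k == 0); rewrite ?mxE. Qed.

Lemma normz1 (R : rcfType) (t : R[i]) (k : int) : `|t| = 1 -> `|t ^ k| = 1.
Proof.
move=> h; case: k => n.
  by rewrite /exprz normrX h expr1n.
by rewrite /exprz normfV normrX h expr1n invr1.
Qed.

Lemma sym_claim (R : rcfType) (a b c d : R[i]) (phi : 'cV[R[i]]_2) :
  a != 0 -> d != 0 -> phi 0 0 != 0 ->
  a * c * phi 0 0 ^+ 2 = b * d * phi 1 0 ^+ 2 ->
  forall n k,
  (d / a) ^ k * (b * d * Psi a b c d phi n (-k) 1 0) =
     (b * d * phi 1 0 / phi 0 0) * Psi a b c d phi n k 0 0 /\
  (d / a) ^ k * (a * c * Psi a b c d phi n (-k) 0 0) =
     (b * d * phi 1 0 / phi 0 0) * Psi a b c d phi n k 1 0.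
Proof.
move=> a0 d0 al0 hsq n; elim: n => [|n IH] k.
  rewrite !Psi00 oppr_eq0; case: eqP => [->|_]; last by rewrite !mulr0.
  rewrite expr0z !mul1r; split; first by field.
  transitivity (a * c * phi 0 0 ^+ 2 / phi 0 0); first by field.
  by rewrite hsq; field.
case: (IH (k + 1)) => I1 I2; case: (IH (k - 1)) => I3 I4.
move: I1 I2 I3 I4; rewrite !opprD opprK.
set l := (b * d * phi 1 0 / phi 0 0) => I1 I2 I3 I4.
split.
  rewrite PsiS0 PsiS1.
  have -> : l * (a * Psi a b c d phi n (k + 1) 0 0 + b * Psi a b c d phi n (k + 1) 1 0)
     = a * (l * Psi a b c d phi n (k + 1) 0 0) + b * (l * Psi a b c d phi n (k + 1) 1 0) by ring.
  rewrite -I1 -I2 expfzDr ?expr1z; last by rewrite mulf_neq0 ?invr_eq0.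
  by field.
rewrite PsiS0 PsiS1.
have -> : l * (c * Psi a b c d phi n (k - 1) 0 0 + d * Psi a b c d phi n (k - 1) 1 0)
   = c * (l * Psi a b c d phi n (k - 1) 0 0) + d * (l * Psi a b c d phi n (k - 1) 1 0) by ring.
rewrite -I3 -I4 -{1}(subrK 1 k) expfzDr ?expr1z; last by rewrite mulf_neq0 ?invr_eq0.
by field.
Qed.

Lemma norm_eq (R : rcfType) (x y : R[i]) : x * x^* = y * y^* -> `|x| = `|y|.
Proof.
move=> h; apply/eqP; by rewrite -(@eqrXn2 _ 2) // !normCK h.
Qed.

Lemma sym_prob (R : rcfType) (a b c d : R[i]) (phi : 'cV[R[i]]_2) :
  a != 0 -> b != 0 -> d != 0 -> phi 0 0 != 0 ->
  a * a^* = d * d^* -> b * b^* = c * c^* ->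
  phi 0 0 * (phi 0 0)^* = phi 1 0 * (phi 1 0)^* ->
  a * c * phi 0 0 ^+ 2 = b * d * phi 1 0 ^+ 2 ->
  forall n k, prob a b c d phi n k = prob a b c d phi n (-k).
Proof.
move=> a0 b0 d0 al0 ad bc hab hsq n k.
case: (@sym_claim _ _ _ _ _ phi a0 d0 al0 hsq n k) => E1 E2.
have th : `|d / a| = 1.
  by rewrite normf_div (@norm_eq _ _ _ (esym ad)) divff // normr_eq0.
move: (congr1 (fun z => `|z| ^+ 2) E1) (congr1 (fun z => `|z| ^+ 2) E2) => /=.
rewrite !normrM normz1 // !mul1r !exprMn normfV exprVn !normCK.
move=> N1 N2.
rewrite /prob /sqnorm !normCK.
have al0' : phi 0 0 * (phi 0 0)^* != 0 by rewrite mulf_neq0 ?conjC_eq0.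
rewrite -hab (mulfK al0') in N1 N2.
rewrite ad -bc [d * _ * _]mulrC in N2.
have K0 : b * b^* * (d * d^*) != 0 by rewrite !mulf_neq0 ?conjC_eq0.
apply: (mulfI K0); rewrite !mulrDr -N1 -N2; ring.
Qed.

Lemma sym_expect (R : rcfType) (a b c d : R[i]) (phi : 'cV[R[i]]_2) n :
  (forall k, prob a b c d phi n k = prob a b c d phi n (-k)) ->
  expect a b c d phi n = 0.
Proof.
move=> hs; rewrite /expect.
set S := \sum_(0 <= i < (2 * n).+1) _.
have hS : S = - S.
  rewrite {1}/S big_nat_rev /= -sumrN; apply: eq_big_nat => i /andP [_ hi].
  have -> : ((0 + (2 * n).+1 - i.+1)%N%:Z - n%:Z) = - (i%:Z - n%:Z) by lia.
  by rewrite mulrNz -hs mulNr.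
have : S *+ 2 = 0 by rewrite mulr2n {1}hS addNr.
by move/eqP; rewrite mulrn_eq0 /= => /eqP.
Qed.

Lemma expect1 (R : rcfType) (a b c d : R[i]) (phi : 'cV[R[i]]_2) :
  expect a b c d phi 1 =
   (c * phi 0 0 + d * phi 1 0) * (c * phi 0 0 + d * phi 1 0)^*
   - (a * phi 0 0 + b * phi 1 0) * (a * phi 0 0 + b * phi 1 0)^*.
Proof.
case: ord2E => e0 e1.
rewrite /expect /prob /sqnorm !big_nat_recr //= big_geq // add0r !normCK.
rewrite !mxE !big_ord_recr !big_ord0 /= !mxE !e0 !e1 /=.
rewrite !(mul0r, mulr0, add0r, addr0, rmorph0).
ring.
Qed.

Lemma expect3 (R : rcfType) (a b c d : R[i]) (phi : 'cV[R[i]]_2) :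
  let u := a * phi 0 0 + b * phi 1 0 in
  let v := c * phi 0 0 + d * phi 1 0 in
  expect a b c d phi 3 =
   - 3%:R * ((a * a * u) * (a * a * u)^*) - (b * (a * v + c * u)) * (b * (a * v + c * u))^*
   - (a * c * u) * (a * c * u)^* + (b * d * v) * (b * d * v)^*
   + (c * (b * v + d * u)) * (c * (b * v + d * u))^* + 3%:R * ((d * d * v) * (d * d * v)^*).
Proof.
move=> U V.
case: ord2E => e0 e1.
have hP0 : forall v : 'cV[R[i]]_2, (mx2 a b 0 0 *m v) 0 0 = a * v 0 0 + b * v 1 0.
  by move=> v; rewrite !mxE !big_ord_recr !big_ord0 /= !mxE e0 e1 /= add0r.
have hP1 : forall v : 'cV[R[i]]_2, (mx2 a b 0 0 *m v) 1 0 = 0.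
  by move=> v; rewrite !mxE !big_ord_recr !big_ord0 /= !mxE e0 e1 /= !mul0r !add0r.
have hQ0 : forall v : 'cV[R[i]]_2, (mx2 0 0 c d *m v) 0 0 = 0.
  by move=> v; rewrite !mxE !big_ord_recr !big_ord0 /= !mxE e0 e1 /= !mul0r !add0r.
have hQ1 : forall v : 'cV[R[i]]_2, (mx2 0 0 c d *m v) 1 0 = c * v 0 0 + d * v 1 0.
  by move=> v; rewrite !mxE !big_ord_recr !big_ord0 /= !mxE e0 e1 /= add0r.
have hD : forall (A B : 'cV[R[i]]_2) i, (A + B) i 0 = A i 0 + B i 0.
  by move=> A B i; rewrite mxE.
have hZ : forall i, (0 : 'cV[R[i]]_2) i 0 = 0.
  by move=> i; rewrite mxE.
rewrite /expect /prob /sqnorm.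
rewrite [(2 * 3).+1]/= !big_nat_recr // big_geq // add0r /=.
move: (mx2 a b 0 0) (mx2 0 0 c d) hP0 hP1 hQ0 hQ1 => P Q hP0 hP1 hQ0 hQ1.
rewrite !mulmx0 ?addr0 ?add0r.
move: (@mulmx _ 2 2 1) hP0 hP1 hQ0 hQ1 => M hP0 hP1 hQ0 hQ1.
rewrite !(hD, hP0, hP1, hQ0, hQ1).
rewrite !hZ !(mulr0, addr0, add0r) !normCK.
rewrite /U /V !(rmorphD, rmorphM, rmorph0, mulr0, mul0r, add0r, addr0).
ring.
Qed.
Lemma core (F : numFieldType) (a a' b b' c c' d d' x x' y y' : F) :
  a != 0 -> a' != 0 -> b != 0 -> b' != 0 -> d != 0 ->
  a * a' + b * b' = 1 -> a * c' + b * d' = 0 -> c * a' + d * b' = 0 ->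
  c * c' + d * d' = 1 ->
  (c * x + d * y) * (c' * x' + d' * y') - (a * x + b * y) * (a' * x' + b' * y') = 0 ->
  let u := a * x + b * y in let u' := a' * x' + b' * y' in
  let v := c * x + d * y in let v' := c' * x' + d' * y' in
  - 3%:R * ((a * a * u) * (a' * a' * u')) - (b * (a * v + c * u)) * (b' * (a' * v' + c' * u'))
   - (a * c * u) * (a' * c' * u') + (b * d * v) * (b' * d' * v')
   + (c * (b * v + d * u)) * (c' * (b' * v' + d' * u')) + 3%:R * ((d * d * v) * (d' * d' * v')) = 0 ->
  x * x' - y * y' = 0 /\ a * b' * x * y' + a' * b * x' * y = 0.
Proof.
move=> a0 a'0 b0 b'0 d0 h1 h2 h3 h4 hE1 u u' v v' hE3.
have ad : a * a' = d * d'.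
  apply/eqP; rewrite -subr_eq0; apply/eqP.
  have -> : a * a' - d * d' = - (a * a' * (c * c' + d * d' - 1)) + (a * a' + b * b' - 1) * d * d'
     + (a * c' + b * d') * a' * c - b * d' * (c * a' + d * b') by ring.
  by rewrite h1 h4 h2 h3 !subrr; ring.
have hc : c = - (d * b') / a'.
  by apply: (mulIf a'0); rewrite mulfVK // -(subr0 (c * a')) -h3; ring.
have hc' : c' = - (b * d') / a.
  by apply: (mulIf a0); rewrite mulfVK // -(subr0 (c' * a)) -h2; ring.
have hb' : b' = (1 - a * a') / b.
  by apply: (mulIf b0); rewrite mulfVK // -h1; ring.
have hd' : d' = a * a' / d.
  by apply: (mulIf d0); rewrite mulfVK // ad; ring.
set K1 := u * u' - v * v'.
set W := b * d' * v * u' + b' * d * v' * u.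
set X := x * x' - y * y'.
set Z := a * b' * x * y' + a' * b * x' * y.
have eE3 : - 3%:R * ((a * a * u) * (a' * a' * u')) - (b * (a * v + c * u)) * (b' * (a' * v' + c' * u'))
   - (a * c * u) * (a' * c' * u') + (b * d * v) * (b' * d' * v')
   + (c * (b * v + d * u)) * (c' * (b' * v' + d' * u')) + 3%:R * ((d * d * v) * (d' * d' * v'))
   = 2%:R * b * b' * W - (3%:R * (a * a') ^+ 2 + (b * b') ^+ 2) * K1.
  rewrite /W /K1 /u /u' /v /v'; rewrite hc hc'; rewrite hb' hd'; field; by rewrite ?a0 ?a'0 ?b0 ?d0.
have eK : K1 = 0 by rewrite /K1 -oppr0 -hE1 /u /u' /v /v'; ring.
have eW : W = 0.
  move: hE3; rewrite eE3 eK mulr0 subr0 => /eqP; rewrite !mulf_eq0 pnatr_eq0 /=.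
  by rewrite (negbTE b0) (negbTE b'0) /= => /eqP.
have eX : X = (a * a' - b * b') * K1 - 2%:R * W.
  rewrite /X /W /K1 /u /u' /v /v' hc hc' hb' hd'; field; by rewrite ?a0 ?a'0 ?b0 ?d0.
have eZ : Z = 2%:R * (a * a') * (b * b') * K1 + (a * a' - b * b') * W.
  rewrite /Z /W /K1 /u /u' /v /v' hc hc' hb' hd'; field; by rewrite ?a0 ?a'0 ?b0 ?d0.
by rewrite eX eZ eK eW; split; ring.
Qed.
Lemma unit_eqs (R : rcfType) (a b c d : R[i]) :
  unitary_mx (mx2 a b c d) ->
  [/\ a * a^* + b * b^* = 1, a * c^* + b * d^* = 0, c * a^* + d * b^* = 0
    & c * c^* + d * d^* = 1].
Proof.
case: ord2E => e0 e1.
move/matrixP => h.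
have := h 0 0; have := h 0 1; have := h 1 0; have := h 1 1.
rewrite !mxE !big_ord_recr !big_ord0 /= !mxE !e0 !e1 /= !add0r.
by move=> -> -> -> ->.
Qed.

Lemma perp_sq (F : fieldType) (a a' b b' c d x x' y y' : F) :
  a' != 0 -> y' != 0 -> c * a' + d * b' = 0 -> x * x' = y * y' ->
  a * b' * x * y' + a' * b * x' * y = 0 ->
  a * c * x ^+ 2 = b * d * y ^+ 2.
Proof.
move=> a'0 y'0 h3 hxy hZ.
have e : a' * y' * (a * c * x ^+ 2 - b * d * y ^+ 2) =
  a * x ^+ 2 * y' * (c * a' + d * b') + a' * b * d * y * (x * x' - y * y')
  - d * x * (a * b' * x * y' + a' * b * x' * y) by ring.
rewrite h3 hxy subrr hZ !(mulr0, addr0, subr0) in e.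
move/eqP: e; rewrite mulf_eq0 mulf_eq0 (negbTE a'0) (negbTE y'0) /= subr_eq0.
by move/eqP.
Qed.

Lemma unit_ad (F : fieldType) (a a' b b' c c' d d' : F) :
  a * a' + b * b' = 1 -> a * c' + b * d' = 0 -> c * a' + d * b' = 0 ->
  c * c' + d * d' = 1 -> a * a' = d * d' /\ b * b' = c * c'.
Proof.
move=> h1 h2 h3 h4.
have ad : a * a' = d * d'.
  apply/eqP; rewrite -subr_eq0; apply/eqP.
  have -> : a * a' - d * d' = - (a * a' * (c * c' + d * d' - 1)) + (a * a' + b * b' - 1) * d * d'
     + (a * c' + b * d') * a' * c - b * d' * (c * a' + d * b') by ring.
  by rewrite h1 h4 h2 h3 !subrr; ring.
split=> //.
have -> : b * b' = 1 - a * a' by rewrite -h1; ring.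
by rewrite ad -h4; ring.
Qed.

Theorem theorem4 (R : rcfType) (a b c d : R[i]) :
  unitary_mx (mx2 a b c d) -> a * b * c * d != 0 ->
  forall phi : 'cV[R[i]]_2,
    (inPhi_s a b c d phi <-> inPhi_0 a b c d phi) /\
    (inPhi_0 a b c d phi <-> inPhi_perp a b c d phi).
Proof.
move=> /unit_eqs [h1 h2 h3 h4] habcd phi.
have [[[a0 b0] c0] d0] : ((a != 0 /\ b != 0) /\ c != 0) /\ d != 0.
  by move: habcd; rewrite !mulf_eq0 !negb_or => /andP[/andP[/andP[-> ->] ->] ->].
have a'0 : a^* != 0 by rewrite conjC_eq0.
have b'0 : b^* != 0 by rewrite conjC_eq0.
have [ad bc] := @unit_ad _ a a^* b b^* c c^* d d^* h1 h2 h3 h4.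
set x := phi 0 0; set y := phi 1 0.
have s_0 : inPhi_s a b c d phi -> inPhi_0 a b c d phi.
  by case=> hp hs; split=> // n; apply: sym_expect.
have o_p : inPhi_0 a b c d phi -> inPhi_perp a b c d phi.
  case=> hp he; split=> //=.
  have E1 := he 1%N; have E3 := he 3%N.
  rewrite expect1 !(rmorphD, rmorphM) in E1.
  rewrite expect3 /= !(rmorphD, rmorphM) in E3.
  have [X Z] := @core _ a a^* b b^* c c^* d d^* x x^* y y^* a0 a'0 b0 b'0 d0 h1 h2 h3 h4 E1 E3.
  split.
    by apply: (@norm_eq R); apply/eqP; rewrite -subr_eq0; apply/eqP.
  move: Z; rewrite /x /y => Z; rewrite !rmorphM -[RHS]Z; ring.
have p_s : inPhi_perp a b c d phi -> inPhi_s a b c d phi.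
  case=> hp /= [hn hZ]; split=> //.
  have hxy : x * x^* = y * y^* by rewrite -!normCK -/x -/y hn.
  have hsum : x * x^* + y * y^* = 1 by move: hp; rewrite /inPhi /sqnorm !normCK.
  have x0 : x != 0.
    apply/negP => /eqP x0; move: hsum; rewrite -hxy x0 mul0r add0r => /eqP.
    by rewrite eq_sym oner_eq0.
  have y'0 : y^* != 0.
    apply/negP => /eqP y0; move: hsum; rewrite hxy y0 mulr0 add0r => /eqP.
    by rewrite eq_sym oner_eq0.
  have hZ' : a * b^* * x * y^* + a^* * b * x^* * y = 0.
    by rewrite /x /y -hZ !rmorphM; ring.
  have hsq := @perp_sq _ a a^* b b^* c d x x^* y y^* a'0 y'0 h3 hxy hZ'.
  move=> n k; exact: (@sym_prob _ a b c d phi a0 b0 d0 x0 ad bc hxy hsq).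
split; split => //.
- by move=> /o_p /p_s.
- by move=> /p_s /s_0.
Qed.
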